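(* Let $N \ge M \ge 1$ be integers, let $\mathcal{U}_r=\{r_1,\dots,r_N\}$ (robots) and $\mathcal{U}_g=\{g_1,\dots,g_M\}$ (goals), and let $\mathcal{F}=\{(i,j): i\in\{1,\dots,N\},\ j\in\{1,\dots,M\}\}$ be the edge set of the complete bipartite graph between them. For each edge $(i,j)\in\mathcal{F}$ let $C_{ij}$ be a real-valued integrable random variable (all defined on a common probability space, with arbitrary joint distribution). Let $\mathcal{O}\subset\mathcal{F}$ be an initial assignment such that every goal $j$ has exactly one $i$ with $(i,j)\in\mathcal{O}$, and every robot $i$ has at most one $j$ with $(i,j)\in\mathcal{O}$. Put $\mathcal{F}_{\mathcal{O}}=\mathcal{F}\setminus\mathcal{O}$ and define, for $\mathcal{A}\subseteq\mathcal{F}_{\mathcal{O}}$, $$J_{\mathcal{O}}(\mathcal{A})=\frac{1}{M}\sum_{j=1}^{M}\mathbb{E}\Big[\min\{C_{kj} : (k,j)\in\mathcal{A}\cup\mathcal{O}\}\Big].$$ Then $J_{\mathcal{O}}:2^{\mathcal{F}_{\mathcal{O}}}\to\mathbb{R}$ is monotone non-increasing and supermodular.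
   Context: A set function $J:2^{\mathcal{F}_{\mathcal{O}}}\to\mathbb{R}$ is monotone non-increasing if $J(\mathcal{A})\ge J(\mathcal{B})$ whenever $\mathcal{A}\subseteq\mathcal{B}\subseteq\mathcal{F}_{\mathcal{O}}$. The marginal decrease of $J$ at $\mathcal{A}$ with respect to $x\notin\mathcal{A}$ is $\Delta_J(x\mid\mathcal{A})=J(\mathcal{A})-J(\mathcal{A}\cup\{x\})$. $J$ is supermodular if for all $\mathcal{A}\subseteq\mathcal{B}\subseteq\mathcal{F}_{\mathcal{O}}$ and all $x\in\mathcal{F}_{\mathcal{O}}\setminus\mathcal{B}$ one has $\Delta_J(x\mid\mathcal{A})\ge\Delta_J(x\mid\mathcal{B})$. The quantity $\min\{C_{kj}:(k,j)\in\mathcal{A}\cup\mathcal{O}\}$ is the effective waiting time at goal $j$ (only the first-arriving robot serves the goal). *)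

(* Defs.v *)
From HB Require Import structures.
From mathcomp Require Import all_boot all_order all_algebra.
From mathcomp Require Import all_classical all_reals all_analysis.
Set Implicit Arguments. Unset Strict Implicit. Unset Printing Implicit Defensive.
Import Order.TTheory GRing.Theory Num.Theory.
Local Open Scope ring_scope.

(* The effective waiting time at goal j under edge set S:
   min { C k j : (k,j) \in S }, computed in the extended reals
   (+oo for an empty set, never the case here since O covers every goal). *)
Definition eff_wait {d} {T : measurableType d} {R : realType}
  {P : probability T R} {N M : nat}
  (C : 'I_N -> 'I_M -> {RV P >-> R}) (S : {set 'I_N * 'I_M}) (j : 'I_M)
  : T -> R :=
  fun x => fine (\big[Order.min/+oo%E]_(k | (k, j) \in S) ((C k j x)%:E : \bar R)).

Definition J_O {d} {T : measurableType d} {R : realType}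
  {P : probability T R} {N M : nat}
  (C : 'I_N -> 'I_M -> {RV P >-> R}) (O A : {set 'I_N * 'I_M}) : R :=
  (M%:R)^-1 * \sum_(j < M) fine ('E_P[eff_wait C (A :|: O) j]).

(* Main.v *)
Require Import Defs.
From HB Require Import structures.
From mathcomp Require Import all_boot all_order all_algebra.
From mathcomp Require Import all_classical all_reals all_analysis.
From mathcomp Require Import lra.
Import Order.TTheory GRing.Theory Num.Theory.
Local Open Scope ring_scope.

Lemma big_efin_seq (R : realType) (I : Type) (r : seq I) (Q : pred I) (f : I -> R) (a : R) :
  (Num.min a (\big[Order.min/a]_(i <- r | Q i) f i))%:E =
  Order.min a%:E (\big[Order.min/+oo%E]_(i <- r | Q i) (f i)%:E).
Proof.
elim: r => [|i r IH]; first by rewrite !big_nil minxx minEle leey.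
rewrite !big_cons; case: (Q i) => //.
by rewrite minCA EFin_min IH minCA.
Qed.

Lemma fine_bigmin (R : realType) (I : finType) (Q : pred I) (f : I -> R) k0 :
  Q k0 ->
  fine (\big[Order.min/+oo%E]_(k | Q k) ((f k)%:E : \bar R)) =
  \big[Order.min/f k0]_(k | Q k) f k.
Proof.
move=> Qk0.
rewrite (bigminD1 k0 Q _ Qk0) (@bigminD1 _ _ _ (f k0) k0 Q f Qk0).
by rewrite -big_efin_seq.
Qed.
Lemma int_min d (T : measurableType d) (R : realType) (P : probability T R)
  (g h : T -> R) :
  P.-integrable setT (EFin \o g) -> P.-integrable setT (EFin \o h) ->
  P.-integrable setT (EFin \o (fun x => Order.min (g x) (h x))).
Proof.
move=> ig ih.
apply: (le_integrable measurableT _ _ (integrableD measurableT (integrable_abse ig) (integrable_abse ih))) => //.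
- apply/measurable_realfun.measurable_EFinP; apply: measurable_realfun.measurable_minr.
  + exact: (proj1 (measurable_realfun.measurable_EFinP _ _) (measurable_int _ ig)).
  + exact: (proj1 (measurable_realfun.measurable_EFinP _ _) (measurable_int _ ih)).
- move=> x _ /=.
  have: Order.min (g x) (h x) = g x \/ Order.min (g x) (h x) = h x.
    by rewrite /Order.min; case: ifP => _; [left|right].
  rewrite lee_fin (ger0_norm (addr_ge0 (normr_ge0 _) (normr_ge0 _))).
  by case=> ->; [rewrite lerDl | rewrite lerDr].
Qed.

Lemma int_bigmin d (T : measurableType d) (R : realType) (P : probability T R)
  (I : Type) (r : seq I) (Q : pred I) (f : I -> T -> R) (a : T -> R) :
  P.-integrable setT (EFin \o a) -> (forall i, P.-integrable setT (EFin \o f i)) ->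
  P.-integrable setT (EFin \o (fun x => \big[Order.min/a x]_(i <- r | Q i) f i x)).
Proof.
move=> ia iF; elim: r => [|i r IH].
  by under [X in _.-integrable _ X]eq_fun do rewrite big_nil.
under [X in _.-integrable _ X]eq_fun do rewrite big_cons.
case: (Q i) => //.
exact (@int_min _ _ _ _ _ _ (iF i) IH).
Qed.

Lemma super_ineq (R : realType) (a b c : R) :
  b <= a -> b - Order.min c b <= a - Order.min c a.
Proof.
move=> ba; case: (leP c b) => cb; case: (leP c a) => ca; lra.
Qed.

Lemma mono_big (R : realType) (I : finType) (Q Q' : pred I) (f : I -> R) a :
  (forall k, Q k -> Q' k) ->
  \big[Order.min/a]_(k | Q' k) f k <= \big[Order.min/a]_(k | Q k) f k.
Proof.
move=> QQ; apply: le_bigmin; first exact: bigmin_le_id.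
by move=> i Qi; apply: bigmin_le_cond; apply: QQ.
Qed.

Lemma add_big (R : realType) (I : finType) (Q : pred I) (f : I -> R) a k :
  \big[Order.min/a]_(i | (i == k) || Q i) f i =
  Order.min (f k) (\big[Order.min/a]_(i | Q i) f i).
Proof.
case Qk: (Q k).
  rewrite (eq_bigl Q); last by move=> i; case: eqP => // ->.
  apply/esym/min_idPr; exact: bigmin_le_cond.
rewrite (bigminD1 k _ _ (introT orP (or_introl (eqxx k)) : (k == k) || Q k)); congr Order.min.
apply: eq_bigl => i; case: eqP => [->|] /=; first by rewrite Qk.
by rewrite andbT.
Qed.

Lemma add_set (R : realType) (N M : nat) (S : {set 'I_N * 'I_M}) i0 j0 j
  (f : 'I_N -> R) a :
  \big[Order.min/a]_(k | (k, j) \in (i0, j0) |: S) f k =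
  if j0 == j then Order.min (f i0) (\big[Order.min/a]_(k | (k, j) \in S) f k)
  else \big[Order.min/a]_(k | (k, j) \in S) f k.
Proof.
case: eqP => [<-|ne].
  rewrite -add_big; apply: eq_bigl => k; by rewrite in_setU1 xpair_eqE eqxx andbT.
apply: eq_bigl => k; rewrite in_setU1 xpair_eqE.
have -> : (j == j0) = false by apply/eqP => E; apply: ne; rewrite E.
by rewrite andbF.
Qed.

Lemma eff_eq {d} {T : measurableType d} {R : realType} {P : probability T R} {N M : nat}
  {C : 'I_N -> 'I_M -> {RV P >-> R}} {S : {set 'I_N * 'I_M}} {j k0} :
  (k0, j) \in S ->
  eff_wait C S j = fun x => \big[Order.min/C k0 j x]_(k | (k, j) \in S) C k j x.
Proof.
move=> H; apply: funext => x; rewrite /eff_wait.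
exact: (@fine_bigmin R _ (fun k => (k, j) \in S) (fun k => C k j x) k0 H).
Qed.

Lemma eff_int {d} {T : measurableType d} {R : realType} {P : probability T R} {N M : nat}
  {C : 'I_N -> 'I_M -> {RV P >-> R}}
  (Cint : forall i j, P.-integrable setT (EFin \o C i j))
  {S : {set 'I_N * 'I_M}} {j k0} :
  (k0, j) \in S -> P.-integrable setT (EFin \o eff_wait C S j).
Proof.
move=> H; rewrite (eff_eq H).
exact: (@int_bigmin _ _ _ P _ (index_enum _) (fun k => (k, j) \in S) (fun k => C k j) (C k0 j)).
Qed.

Lemma fineE d (T : measurableType d) (R : realType) (P : probability T R) (f : T -> R) :
  fine 'E_P[f] = fine (\int[P]_x (f x)%:E)%E.
Proof. by rewrite unlock. Qed.

Theorem theorem1 (d : measure_display) (T : measurableType d) (R : realType)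
  (P : probability T R) (N M : nat) (HM : (1 <= M)%N) (HNM : (M <= N)%N)
  (C : 'I_N -> 'I_M -> {RV P >-> R})
  (Cint : forall i j, P.-integrable setT (EFin \o C i j))
  (O : {set 'I_N * 'I_M})
  (Ogoal : forall j : 'I_M, exists! i : 'I_N, (i, j) \in O)
  (Orobot : forall (i : 'I_N) (j j' : 'I_M), (i, j) \in O -> (i, j') \in O -> j = j') :
  (forall A B : {set 'I_N * 'I_M},
     A \subset B -> B \subset ~: O -> J_O C O B <= J_O C O A) /\
  (forall (A B : {set 'I_N * 'I_M}) (x : 'I_N * 'I_M),
     A \subset B -> B \subset ~: O -> x \in ~: O -> x \notin B ->
     J_O C O B - J_O C O (x |: B) <= J_O C O A - J_O C O (x |: A)).
Proof.
have M0 : 0 <= (M%:R : R)^-1 by rewrite invr_ge0 ler0n.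
have inS j k0 (S : {set 'I_N * 'I_M}) : (k0, j) \in O -> (k0, j) \in S :|: O.
  by move=> H; rewrite inE H orbT.
have Iint j k0 S : (k0, j) \in O -> P.-integrable setT (EFin \o eff_wait C (S :|: O) j).
  by move=> H; apply: (eff_int Cint (inS _ _ S H)).
have Ifin j k0 S : (k0, j) \in O ->
    (\int[P]_x (eff_wait C (S :|: O) j x)%:E)%E \is a fin_num.
  by move=> H; apply: integrable_fin_num => //; exact: (Iint _ _ S H).
split.
- move=> A B AB BO; rewrite /J_O; apply: ler_wpM2l => //.
  apply: ler_sum => j _; have [k0 [Hk0 _]] := Ogoal j.
  rewrite !fineE; apply: fine_le; rewrite ?inE; [exact: Ifin Hk0|exact: Ifin Hk0|].
  apply: le_integral => //; [exact: Iint Hk0|exact: Iint Hk0|].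
  move=> x _; rewrite lee_fin (eff_eq (inS _ _ B Hk0)) (eff_eq (inS _ _ A Hk0)).
  apply: mono_big => k; rewrite !inE => /orP[H|->]; last by rewrite orbT.
  by rewrite (fintype.subsetP AB _ H).
- move=> A B [i0 j0] AB BO xO xB; rewrite /J_O -!mulrBr; apply: ler_wpM2l => //.
  rewrite -!sumrB; apply: ler_sum => j _; have [k0 [Hk0 _]] := Ogoal j.
  rewrite !fineE -lee_fin !EFinB !fineK; try exact: Ifin Hk0.
  rewrite -!integralB_EFin //; try exact: Iint Hk0.
  apply: le_integral => //.
  + by apply: integrableB => //; exact: Iint Hk0.
  + by apply: integrableB => //; exact: Iint Hk0.
  move=> x _; rewrite -!EFinB lee_fin.
  rewrite -!finset.setUA (eff_eq (inS _ _ B Hk0)) (eff_eq (inS _ _ A Hk0)).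
  have inS' S : (k0, j) \in [set (i0, j0)] :|: (S :|: O).
    by rewrite !inE Hk0 !orbT.
  rewrite (eff_eq (inS' B)) (eff_eq (inS' A)) !add_set.
  case: ifP => _; last by rewrite !subrr.
  apply: super_ineq; apply: mono_big => k; rewrite !inE => /orP[H|->]; last by rewrite orbT.
  by rewrite (fintype.subsetP AB _ H).
Qed.
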